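(* Let $\bm{H}\in\mathbb{R}^{n\times n}$ be symmetric positive definite, and let $$\mathbf{M}=\begin{bmatrix}(1+\beta)(\mathbf{I}_n-\eta\bm{H}) & \beta(-\mathbf{I}_n+\eta\bm{H})\\ \mathbf{I}_n & \mathbf{0}_n\end{bmatrix}\in\mathbb{R}^{2n\times 2n}.$$ Suppose $0<\eta\le 1/\lambda_{\max}(\bm{H})$ and $1>\beta\ge\frac{1-\sqrt{\eta\lambda_{\min}(\bm{H})}}{1+\sqrt{\eta\lambda_{\min}(\bm{H})}}$, and let $\mathbf{v}_t=\mathbf{M}\mathbf{v}_{t-1}$ for $t\le T$. Then for every $k\le T$, $$\|\mathbf{v}_k\|\le C\Big(\sqrt{\beta(1-\eta\lambda_{\min}(\bm{H}))}\Big)^k\|\mathbf{v}_0\|,\qquad C=\frac{2\beta(1-\eta\lambda_{\min}(\bm{H}))+2}{\sqrt{\min\{g(\beta,\eta\lambda_{\min}(\bm{H})),\,g(\beta,\eta\lambda_{\max}(\bm{H}))\}}},$$ where $g(x,y)=4x(1-y)-[(1+x)(1-y)]^2$.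
   Context: $\lambda_{\min}(\cdot)$, $\lambda_{\max}(\cdot)$ denote smallest and largest eigenvalues; $\|\cdot\|$ is the Euclidean norm; $\mathbf{I}_n$, $\mathbf{0}_n$ are the $n\times n$ identity and zero matrices. *)

(* Defs.v *)
From HB Require Import structures.
From mathcomp Require Import all_boot all_order all_algebra.
From mathcomp Require Import reals.
Set Implicit Arguments. Unset Strict Implicit. Unset Printing Implicit Defensive.
Import Order.TTheory GRing.Theory Num.Theory.
Local Open Scope ring_scope.

Definition vnorm (R : realType) (m : nat) (v : 'cV[R]_m) : R :=
  Num.sqrt (\sum_(i < m) v i 0 ^+ 2).

Definition symmetric_mx (R : realType) (n : nat) (H : 'M[R]_n) : Prop := H^T = H.

Definition posdef_mx (R : realType) (n : nat) (H : 'M[R]_n) : Prop :=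
  forall x : 'cV[R]_n, x != 0 -> 0 < (x^T *m H *m x) 0 0.

Definition is_lambda_min (R : realType) (n : nat) (H : 'M[R]_n) (l : R) : Prop :=
  eigenvalue H l /\ forall a, eigenvalue H a -> l <= a.

Definition is_lambda_max (R : realType) (n : nat) (H : 'M[R]_n) (l : R) : Prop :=
  eigenvalue H l /\ forall a, eigenvalue H a -> a <= l.

Definition Mmat (R : realType) (n : nat) (H : 'M[R]_n) (eta beta : R) : 'M[R]_(n + n) :=
  block_mx ((1 + beta) *: (1%:M - eta *: H)) (beta *: (- 1%:M + eta *: H))
           1%:M 0.

Definition gfun (R : realType) (x y : R) : R :=
  4 * x * (1 - y) - ((1 + x) * (1 - y)) ^+ 2.

(* Main.v *)
Require Import Defs.
From HB Require Import structures.
From mathcomp Require Import all_boot all_order all_algebra.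
From mathcomp Require Import reals.
From mathcomp Require Import complex spectral sesquilinear.
From mathcomp Require Import ring lra.
Import Order.TTheory GRing.Theory Num.Theory.
Local Open Scope ring_scope.

Lemma Q_upper (R : realType) (a b x y : R) : 0 <= b -> a ^+ 2 <= 4 * b ->
  x ^+ 2 - a * x * y + b * y ^+ 2 <= (1 + b) * (x ^+ 2 + y ^+ 2).
Proof.
move=> hb ha.
have h : 0 <= 4 * (b * x ^+ 2 + a * x * y + y ^+ 2).
  have e : 4 * (b * x ^+ 2 + a * x * y + y ^+ 2) = (2 * y + a * x) ^+ 2 + (4 * b - a ^+ 2) * x ^+ 2 by ring.
  rewrite e; apply: addr_ge0; first exact: sqr_ge0.
  by apply: mulr_ge0; [rewrite subr_ge0|exact: sqr_ge0].
nra.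
Qed.

Lemma Q_lower (R : realType) (a b x y : R) : 0 <= b ->
  (4 * b - a ^+ 2) * (x ^+ 2 + y ^+ 2) <= 4 * (1 + b) * (x ^+ 2 - a * x * y + b * y ^+ 2).
Proof.
move=> hb.
have h4 : 0 < 4 + a ^+ 2 by have := sqr_ge0 a; lra.
have e : (4 + a ^+ 2) * (4 * (1 + b) * (x ^+ 2 - a * x * y + b * y ^+ 2) - (4 * b - a ^+ 2) * (x ^+ 2 + y ^+ 2))
   = ((4 + a ^+ 2) * x - 2 * a * (1 + b) * y) ^+ 2 + ((a ^+ 2 - 4 * b) * y) ^+ 2 by ring.
have : 0 <= (4 + a ^+ 2) * (4 * (1 + b) * (x ^+ 2 - a * x * y + b * y ^+ 2) - (4 * b - a ^+ 2) * (x ^+ 2 + y ^+ 2)).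
  by rewrite e; apply: addr_ge0; exact: sqr_ge0.
rewrite pmulr_rge0 // subr_ge0 //.
Qed.

Lemma core (R : realType) (a b G : R) (T : nat) (x y : nat -> R) :
  0 <= b -> 0 < G -> G <= 4 * b - a ^+ 2 ->
  (forall t, (t < T)%N -> x t.+1 = a * x t - b * y t /\ y t.+1 = x t) ->
  forall k, (k <= T)%N ->
  G * (x k ^+ 2 + y k ^+ 2) <= 4 * (1 + b) ^+ 2 * b ^+ k * (x 0%N ^+ 2 + y 0%N ^+ 2).
Proof.
move=> hb hG hGa hrec.
pose Q t := x t ^+ 2 - a * x t * y t + b * y t ^+ 2.
have hQ : forall k, (k <= T)%N -> Q k = b ^+ k * Q 0%N.
  elim=> [|k IH] hk; first by rewrite expr0 mul1r.
  have [h1 h2] := hrec k hk.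
  rewrite exprS -mulrA -IH; last exact: ltnW.
  by rewrite /Q h1 h2; ring.
move=> k hk.
have ha : a ^+ 2 <= 4 * b by lra.
have hbk : 0 <= b ^+ k by exact: exprn_ge0.
have h1 := @Q_lower R a b (x k) (y k) hb.
have h2 := @Q_upper R a b (x 0%N) (y 0%N) hb ha.
have hs : 0 <= x k ^+ 2 + y k ^+ 2 by apply: addr_ge0; exact: sqr_ge0.
apply: (le_trans (y := (4 * b - a ^+ 2) * (x k ^+ 2 + y k ^+ 2))).
  by apply: ler_wpM2r.
apply: (le_trans h1).
rewrite -/(Q k) hQ // -/(Q 0%N).
have e : 4 * (1 + b) ^+ 2 * b ^+ k * (x 0%N ^+ 2 + y 0%N ^+ 2) = 4 * (1 + b) * b ^+ k * ((1 + b) * (x 0%N ^+ 2 + y 0%N ^+ 2)) by ring.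
rewrite e; idtac.
rewrite -[X in _ <= X]mulrA; apply: (ler_wpM2l _ _).
  by apply: mulr_ge0; lra.
exact: (ler_wpM2l hbk h2).
Qed.

Lemma reRe (R : realType) (z : R[i]) : z \is Num.real -> (real_complex R) (complex.Re z) = z.
Proof. exact: RRe_real. Qed.

Lemma spec_exists (R : realType) (n : nat) (H : 'M[R]_n) : symmetric_mx H ->
  exists (P : 'M[R[i]]_n) (d : 'rV[R]_n),
    [/\ map_mx Num.conj P^T *m P = 1%:M,
        P *m map_mx (real_complex R) H = diag_mx (map_mx (real_complex R) d) *m P &
        forall i, eigenvalue H (d 0 i)].
Proof.
move=> Hs.
set Hc := map_mx (real_complex R) H.
have Hh : Hc \is hermsymmx.
  apply: realsym_hermsym.
    apply/is_hermitianmxP; rewrite expr0 scale1r map_mx_id //.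
    by rewrite /Hc map_trmx Hs.
  by apply/mxOverP => i j; rewrite mxE; apply/complex_realP; exists (H i j).
have Hn := hermitian_normalmx Hh.
have /orthomx_spectralP HE := Hn.
set P := spectralmx Hc in HE.
set sp := spectral_diag Hc in HE.
have Pu : P \is unitarymx by exact: spectral_unitarymx.
have Pi : P \in unitmx by exact: spectral_unit.
have spr := hermitian_spectral_diag_real Hh.
exists P, (map_mx (@complex.Re R) sp).
have spE : map_mx (real_complex R) (map_mx (@complex.Re R) sp) = sp.
  apply/matrixP => i j; rewrite !mxE; apply: RRe_real.
  by move/mxOverP: spr; apply.
rewrite spE; split.
- by rewrite -invmx_unitary // mulVmx.
- by rewrite HE !mulmxA mulmxV // mul1mx.
- move=> i.
  rewrite eigenvalue_root_char -(fmorph_root (real_complex R)) map_char_poly -/Hc.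
  rewrite -eigenvalue_root_char.
  rewrite mxE -[X in eigenvalue _ X]/((real_complex R) (complex.Re (sp 0 i))) reRe; last by move/mxOverP: spr; apply.
  apply/eigenvalueP; exists (row i P).
    by rewrite -row_mul HE !mulmxA mulmxV // mul1mx mul_diag_mx; apply/rowP => j; rewrite !mxE.
  apply/eqP => r0.
  have := congr1 (fun M => row i M) (mulmxV Pi).
  rewrite row_mul r0 mul0mx => /rowP /(_ i); rewrite !mxE eqxx /=.
  by move/eqP; rewrite eq_sym oner_eq0.
Qed.

Lemma fsum (R : realType) (n : nat) (F : 'I_n -> R) : (real_complex R) (\sum_i F i) = \sum_i (real_complex R) (F i).
Proof. exact: rmorph_sum. Qed.

Lemma fsq (R : realType) (r : R) : (real_complex R) (r ^+ 2) = (real_complex R) r * (real_complex R) r.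
Proof. by rewrite rmorphXn expr2. Qed.

Lemma conjf (R : realType) (r : R) : Num.conj ((real_complex R) r) = (real_complex R) r.
Proof. by apply/eqP; rewrite eq_complex /= oppr0 !eqxx. Qed.

Lemma conjmul (R : realType) (z : R[i]) : Num.conj z * z = (real_complex R) (complex.Re z ^+ 2 + complex.Im z ^+ 2).
Proof.
case: z => a b /=; rewrite /conjc /=.
apply/eqP; rewrite eq_complex /=; apply/andP; split; apply/eqP; ring.
Qed.

Lemma sumsq_P (R : realType) (n : nat) (P : 'M[R[i]]_n) (u : 'cV[R]_n) :
  map_mx Num.conj P^T *m P = 1%:M ->
  \sum_i u i 0 ^+ 2 = \sum_i (complex.Re ((P *m map_mx (real_complex R) u) i 0) ^+ 2
                             + complex.Im ((P *m map_mx (real_complex R) u) i 0) ^+ 2).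
Proof.
move=> PP; apply: (@complexI R).
set Z := P *m map_mx (real_complex R) u.
have e1 : map_mx Num.conj Z^T *m Z = map_mx Num.conj (map_mx (real_complex R) u)^T *m map_mx (real_complex R) u.
  by rewrite /Z trmx_mul map_mxM !mulmxA -(mulmxA _ _ P) PP mulmx1.
move/matrixP/(_ 0 0): e1; rewrite !mxE.
move=> E; rewrite !fsum.
rewrite (eq_bigr (fun i => (map_mx Num.conj (map_mx (real_complex R) u)^T) 0 i * (map_mx (real_complex R) u) i 0)); last first.
  by move=> i _; rewrite !mxE conjf fsq.
rewrite -E; apply: eq_bigr => i _; rewrite !mxE conjmul //.
Qed.

Lemma Pstep (R : realType) (n : nat) (H : 'M[R]_n) (P : 'M[R[i]]_n) (d : 'rV[R]_n) (al ga : R) (x : 'cV[R]_n) i :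
  P *m map_mx (real_complex R) H = diag_mx (map_mx (real_complex R) d) *m P ->
  (P *m map_mx (real_complex R) ((al *: (1%:M - ga *: H)) *m x)) i 0
    = (real_complex R) (al * (1 - ga * d 0 i)) * (P *m map_mx (real_complex R) x) i 0.
Proof.
move=> PH.
rewrite map_mxM map_mxZ map_mxB map_mx1 map_mxZ.
rewrite mulmxA -scalemxAr mulmxBr mulmx1 -scalemxAr PH.
rewrite -scalemxAl mulmxBl -scalemxAl -mulmxA mul_diag_mx !mxE.
rewrite rmorphM rmorphB rmorph1 rmorphM /=.
by ring.
Qed.

Lemma fN (R : realType) (r : R) : (real_complex R) (- r) = - (real_complex R) r.
Proof. exact: rmorphN. Qed.

Lemma mapD_f (R : realType) (m p : nat) (A B : 'M[R]_(m, p)) : map_mx (real_complex R) (A + B) = map_mx (real_complex R) A + map_mx (real_complex R) B.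
Proof. by apply/matrixP => k l; rewrite !mxE rmorphD. Qed.

Lemma Mstep (R : realType) (n : nat) (H : 'M[R]_n) (P : 'M[R[i]]_n) (d : 'rV[R]_n) (eta beta : R)
  (w w' : 'cV[R]_(n + n)) i :
  P *m map_mx (real_complex R) H = diag_mx (map_mx (real_complex R) d) *m P ->
  w' = Mmat H eta beta *m w ->
  (P *m map_mx (real_complex R) (usubmx w')) i 0 =
     (real_complex R) ((1 + beta) * (1 - eta * d 0 i)) * (P *m map_mx (real_complex R) (usubmx w)) i 0
   - (real_complex R) (beta * (1 - eta * d 0 i)) * (P *m map_mx (real_complex R) (dsubmx w)) i 0
  /\ (P *m map_mx (real_complex R) (dsubmx w')) i 0 = (P *m map_mx (real_complex R) (usubmx w)) i 0.
Proof.
move=> PH ->.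
have wE : Mmat H eta beta *m w = Mmat H eta beta *m col_mx (usubmx w) (dsubmx w) by rewrite vsubmxK.
rewrite wE /Mmat mul_block_col col_mxKu col_mxKd.
rewrite mul1mx mul0mx addr0; split => //.
have e : beta *: (- 1%:M + eta *: H) = (- beta) *: (1%:M - eta *: H) :> 'M[R]_n.
  by rewrite scaleNr -scalerN opprB addrC.
rewrite e mapD_f mulmxDr mxE !(Pstep _ _ _ _ _ _ _ _ _ PH).
by rewrite mulNr -[X in _ + X * _]/((real_complex R) (- (beta * (1 - eta * d 0 i)))) fN mulNr.
Qed.

Lemma ReIm_step (R : realType) (a b : R) (z w : R[i]) :
  complex.Re ((real_complex R) a * z - (real_complex R) b * w) = a * complex.Re z - b * complex.Re w /\
  complex.Im ((real_complex R) a * z - (real_complex R) b * w) = a * complex.Im z - b * complex.Im w.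
Proof. by case: z => z1 z2; case: w => w1 w2 /=; split; ring. Qed.

Lemma eig_pos (R : realType) (n : nat) (H : 'M[R]_n) (a : R) :
  posdef_mx H -> eigenvalue H a -> 0 < a.
Proof.
move=> pd /eigenvalueP [u uH u0].
have x0 : u^T != 0 by rewrite trmx_eq0.
have := pd _ x0; rewrite trmxK uH -scalemxAl mxE.
have : 0 < (u *m u^T) 0 0.
  rewrite mxE; have [j uj] : exists j, u 0 j != 0.
    apply/existsP; apply: contraNT u0 => /existsPn h; apply/eqP/rowP => j.
    by rewrite mxE; move/negPn/eqP: (h j).
  rewrite (bigD1 j) //= mxE; apply: ltr_pwDl.
    by rewrite -expr2 lt_def sqr_ge0 andbT sqrf_eq0 uj.
  by apply: sumr_ge0 => k _; rewrite mxE -expr2 sqr_ge0.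
move=> h1 h2.
by rewrite -(pmulr_lgt0 _ h1).
Qed.

Lemma gfun_min (R : realType) (x y1 y y2 : R) : y1 <= y -> y <= y2 ->
  Num.min (gfun x y1) (gfun x y2) <= gfun x y.
Proof.
move=> h1 h2.
have e : (y2 - y1) * gfun x y - (y2 - y) * gfun x y1 - (y - y1) * gfun x y2
   = (y2 - y1) * ((1 + x) ^+ 2 * ((y - y1) * (y2 - y))) by rewrite /gfun; ring.
have hp : 0 <= (y2 - y1) * ((1 + x) ^+ 2 * ((y - y1) * (y2 - y))).
  apply: mulr_ge0; first lra.
  by apply: mulr_ge0; [exact: sqr_ge0|apply: mulr_ge0; lra].
set m := Num.min _ _.
have m1 : m <= gfun x y1 by rewrite /m ge_min lexx.
have m2 : m <= gfun x y2 by rewrite /m ge_min lexx orbT.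
have [yy|yy] := eqVneq y1 y2.
  by have -> : y = y1 by apply/eqP; rewrite eq_le h1 yy h2.
have hy : 0 < y2 - y1 by rewrite subr_gt0 lt_def eq_sym yy /= (le_trans h1 h2).
rewrite -(ler_pM2l hy).
have a1 : (y2 - y) * m <= (y2 - y) * gfun x y1 by apply: ler_wpM2l => //; lra.
have a2 : (y - y1) * m <= (y - y1) * gfun x y2 by apply: ler_wpM2l => //; lra.
nra.
Qed.

Lemma core2 (R : realType) (a b r G : R) (T : nat) (x y : nat -> R) :
  0 <= b -> b <= r -> 0 < G -> G <= 4 * b - a ^+ 2 ->
  (forall t, (t < T)%N -> x t.+1 = a * x t - b * y t /\ y t.+1 = x t) ->
  forall k, (k <= T)%N ->
  (x k ^+ 2 + y k ^+ 2) * G <= 4 * (1 + r) ^+ 2 * r ^+ k * (x 0%N ^+ 2 + y 0%N ^+ 2).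
Proof.
move=> hb hbr hG hGa hrec k hk.
rewrite mulrC; apply: (le_trans (@core R a b G T x y hb hG hGa hrec k hk)).
have hs : 0 <= x 0%N ^+ 2 + y 0%N ^+ 2 by apply: addr_ge0; exact: sqr_ge0.
apply: ler_wpM2r => //.
apply: ler_pM.
- by apply: mulr_ge0; [lra | exact: sqr_ge0].
- exact: exprn_ge0.
- apply: ler_wpM2l; first lra.
  by apply: lerXn2r; rewrite ?nnegrE; lra.
- by apply: lerXn2r; rewrite ?nnegrE //; lra.
Qed.

Theorem lemma2 (R : realType) (n : nat) (H : 'M[R]_n) (lmin lmax eta beta : R)
  (T : nat) (v : nat -> 'cV[R]_(n + n)) :
  symmetric_mx H -> posdef_mx H ->
  is_lambda_min H lmin -> is_lambda_max H lmax ->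
  0 < eta -> eta <= lmax^-1 ->
  beta < 1 ->
  (1 - Num.sqrt (eta * lmin)) / (1 + Num.sqrt (eta * lmin)) <= beta ->
  (forall t, (1 <= t <= T)%N -> v t = Mmat H eta beta *m v t.-1) ->
  forall k, (k <= T)%N ->
    vnorm (v k) * Num.sqrt (Num.min (gfun beta (eta * lmin)) (gfun beta (eta * lmax)))
    <= (2 * beta * (1 - eta * lmin) + 2)
       * Num.sqrt (beta * (1 - eta * lmin)) ^+ k * vnorm (v 0%N).
Proof.
move=> Hs Hpd [lminE lminP] [lmaxE lmaxP] heta hetamax hb1 hbeta hrec k hk.
have lmin0 : 0 < lmin := @eig_pos R n H lmin Hpd lminE.
have lmax0 : 0 < lmax := @eig_pos R n H lmax Hpd lmaxE.
have lminmax : lmin <= lmax := lminP _ lmaxE.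
have elmax : eta * lmax <= 1.
  have := ler_wpM2r (ltW lmax0) hetamax.
  by rewrite mulVf ?gt_eqF.
have elmin0 : 0 <= eta * lmin by apply: mulr_ge0; apply: ltW.
have elmin1 : eta * lmin <= eta * lmax by apply: ler_wpM2l => //; apply: ltW.
have beta0 : 0 <= beta.
  apply: le_trans hbeta.
  set s := Num.sqrt (eta * lmin).
  have s0 : 0 <= s := sqrtr_ge0 _.
  have s2 : s ^+ 2 = eta * lmin by rewrite sqr_sqrtr.
  have s1 : s <= 1 by nra.
  by apply: divr_ge0; lra.
have [P [d [PP PH Pe]]] := @spec_exists R n H Hs.
set rho2 := beta * (1 - eta * lmin).
set Gm := Num.min _ _.
have rho0 : 0 <= rho2 by apply: mulr_ge0; lra.
have hR0 : 0 <= (2 * beta * (1 - eta * lmin) + 2).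
  by have : 0 <= beta * (1 - eta * lmin) by []; nra.
have [Gle|Ggt] := lerP Gm 0.
  rewrite (eqP (_ : Num.sqrt Gm == 0)) ?sqrtr_eq0 // mulr0.
  apply: mulr_ge0; last exact: sqrtr_ge0.
  by apply: mulr_ge0 => //; apply: exprn_ge0; exact: sqrtr_ge0.
pose S (w : 'cV[R]_(n + n)) := \sum_(j < n + n) w j 0 ^+ 2.
pose X t := P *m map_mx (real_complex R) (usubmx (v t)).
pose Y t := P *m map_mx (real_complex R) (dsubmx (v t)).
have SE t : S (v t) = \sum_i ((complex.Re (X t i 0) ^+ 2 + complex.Re (Y t i 0) ^+ 2)
                            + (complex.Im (X t i 0) ^+ 2 + complex.Im (Y t i 0) ^+ 2)).
  rewrite /S big_split_ord /=.
  have e1 : \sum_i v t (lshift n i) 0 ^+ 2 = \sum_i (usubmx (v t)) i 0 ^+ 2.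
    by apply: eq_bigr => i _; rewrite mxE.
  have e2 : \sum_i v t (rshift n i) 0 ^+ 2 = \sum_i (dsubmx (v t)) i 0 ^+ 2.
    by apply: eq_bigr => i _; rewrite mxE.
  rewrite e1 e2 !(sumsq_P _ _ _ _ PP) -big_split /=.
  by apply: eq_bigr => i _; rewrite /X /Y; ring.
have key : S (v k) * Gm <= 4 * (1 + rho2) ^+ 2 * rho2 ^+ k * S (v 0%N).
  rewrite !SE mulr_suml mulr_sumr; apply: ler_sum => i _.
  set a := (1 + beta) * (1 - eta * d 0 i).
  set b := beta * (1 - eta * d 0 i).
  have di1 : lmin <= d 0 i := lminP _ (Pe i).
  have di2 : d 0 i <= lmax := lmaxP _ (Pe i).
  have edi1 : eta * lmin <= eta * d 0 i by apply: ler_wpM2l => //; apply: ltW.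
  have edi2 : eta * d 0 i <= eta * lmax by apply: ler_wpM2l => //; apply: ltW.
  have hb0 : 0 <= b by apply: mulr_ge0; lra.
  have hbr : b <= rho2 by apply: ler_wpM2l => //; lra.
  have hGa : Gm <= 4 * b - a ^+ 2.
    have -> : 4 * b - a ^+ 2 = gfun beta (eta * d 0 i) by rewrite /gfun /a /b; ring.
    exact: gfun_min.
  have rec t : (t < T)%N -> X t.+1 i 0 = real_complex R a * X t i 0 - real_complex R b * Y t i 0
                           /\ Y t.+1 i 0 = X t i 0.
    move=> ht; apply: (Mstep _ _ _ _ _ _ _ _ _ _ PH); apply: hrec.
    by rewrite ltnS ht.
  have c1 := @core2 R a b rho2 Gm T (fun t => complex.Re (X t i 0)) (fun t => complex.Re (Y t i 0))
     hb0 hbr Ggt hGa (fun t ht => let: conj p q := rec t ht in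
        conj (eq_trans (f_equal _ p) (proj1 (ReIm_step _ _ _ _ _))) (f_equal _ q)) k hk.
  have c2 := @core2 R a b rho2 Gm T (fun t => complex.Im (X t i 0)) (fun t => complex.Im (Y t i 0))
     hb0 hbr Ggt hGa (fun t ht => let: conj p q := rec t ht in
        conj (eq_trans (f_equal _ p) (proj2 (ReIm_step _ _ _ _ _))) (f_equal _ q)) k hk.
  rewrite mulrDl mulrDr; exact: lerD.
have Sk0 : 0 <= S (v k) by apply: sumr_ge0 => j _; exact: sqr_ge0.
have S00 : 0 <= S (v 0%N) by apply: sumr_ge0 => j _; exact: sqr_ge0.
rewrite /vnorm -/(S (v k)) -/(S (v 0%N)).
rewrite -(@ler_pXn2r _ 2) //; last first.
  rewrite nnegrE; apply: mulr_ge0; last exact: sqrtr_ge0.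
  by apply: mulr_ge0 => //; apply: exprn_ge0; exact: sqrtr_ge0.
  by rewrite nnegrE; apply: mulr_ge0; exact: sqrtr_ge0.
rewrite !exprMn !sqr_sqrtr // ?(ltW Ggt) // -exprM mulnC exprM sqr_sqrtr //.
apply: (le_trans key).
rewrite le_eqVlt; apply/orP; left; apply/eqP; rewrite /rho2; ring.
Qed.
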